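(* Let $E$ be a Banach lattice, $F\subseteq E$ a norm-closed, order dense ideal of $E$, and $T\in Z(E)$. Let $T_F$ denote the restriction of $T$ to $F$ (an operator on $F$). Then $\|T_F\|=\|T\|$.
   Context: $Z(E)=\{T\in\mathcal L(E):|T|\le\lambda I\text{ for some }\lambda\}$ is the center of $E$; elements of $Z(E)$ are band preserving, so $T$ maps $F$ into $F$. *)

(* Defs.v *)
From HB Require Import structures.
From mathcomp Require Import all_boot all_order all_algebra.
From mathcomp Require Import all_classical all_reals all_analysis.
Set Implicit Arguments. Unset Strict Implicit. Unset Printing Implicit Defensive.
Import Order.TTheory GRing.Theory Num.Theory.
Import numFieldNormedType.Exports.
Local Open Scope classical_set_scope.
Local Open Scope ring_scope.

Definition vector_lattice {R : realType} {E : lmodType R}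
  (le : E -> E -> Prop) (join : E -> E -> E) : Prop :=
  [/\ (forall x, le x x),
      (forall x y, le x y -> le y x -> x = y),
      (forall x y z, le x y -> le y z -> le x z),
      (forall x y z, le x y -> le (x + z) (y + z)) &
      ((forall (a : R) x y, 0 <= a -> le x y -> le (a *: x) (a *: y)) /\
      (forall x y, le x (join x y) /\ le y (join x y) /\
                   forall z, le x z -> le y z -> le (join x y) z))].

Definition vabs {R : realType} {E : lmodType R} (join : E -> E -> E) (x : E) : E :=
  join x (- x).

Definition lattice_norm {R : realType} {E : normedModType R}
  (le : E -> E -> Prop) (join : E -> E -> E) : Prop :=
  forall x y : E, le (vabs join x) (vabs join y) -> `|x| <= `|y|.

Definition banach_lattice {R : realType} {E : completeNormedModType R}
  (le : E -> E -> Prop) (join : E -> E -> E) : Prop :=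
  vector_lattice le join /\ lattice_norm le join.

Definition is_ideal {R : realType} {E : lmodType R}
  (le : E -> E -> Prop) (join : E -> E -> E) (F : set E) : Prop :=
  [/\ F 0,
      (forall x y, F x -> F y -> F (x + y)),
      (forall (a : R) x, F x -> F (a *: x)) &
      (forall x y, F y -> le (vabs join x) (vabs join y) -> F x)].

Definition order_dense {R : realType} {E : lmodType R}
  (le : E -> E -> Prop) (F : set E) : Prop :=
  forall x, le 0 x -> x <> 0 -> exists y, [/\ F y, le 0 y, y <> 0 & le y x].

(* T in the center Z(E): T bounded linear with -lam I <= T <= lam I in the
   order of operators, i.e. |T| <= lam I. *)
Definition in_center {R : realType} {E : normedModType R}
  (le : E -> E -> Prop) (T : {linear E -> E}) : Prop :=
  continuous T /\
  exists lam : R, forall x, le 0 x -> le (- (lam *: x)) (T x) /\ le (T x) (lam *: x).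

Definition opnorm_on {R : realType} {E : normedModType R}
  (A : set E) (T : E -> E) : R :=
  sup [set `|T x| | x in [set x | A x /\ `|x| <= 1]].

(* Main.v *)
Require Import Defs.
From HB Require Import structures.
From mathcomp Require Import all_boot all_order all_algebra.
From mathcomp Require Import all_classical all_reals all_analysis.
From mathcomp Require Import ring lra.
Import Order.TTheory GRing.Theory Num.Theory.
Import archimedean.Num.Theory archimedean.Num.Def.
Import numFieldNormedType.Exports.
Local Open Scope classical_set_scope.
Local Open Scope ring_scope.

Set Implicit Arguments.
Unset Strict Implicit.
Section Riesz.
Variables (R : realType) (E : normedModType R) (le : E -> E -> Prop) (join : E -> E -> E).
Hypothesis hVL : vector_lattice le join.
Hypothesis hLN : lattice_norm le join.

Lemma lerf x : le x x. Proof. by case: hVL. Qed.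
Lemma leanti x y : le x y -> le y x -> x = y. Proof. by case: hVL => _ h _ _ _; apply: h. Qed.
Lemma letr x y z : le x y -> le y z -> le x z. Proof. by case: hVL => _ _ h _ _; apply: h. Qed.
Lemma leDr x y z : le x y -> le (x + z) (y + z). Proof. by case: hVL => _ _ _ h _; apply: h. Qed.
Lemma leZ a x y : 0 <= a -> le x y -> le (a *: x) (a *: y).
Proof. by case: hVL => _ _ _ _ [h _]; apply: h. Qed.
Lemma jub1 x y : le x (join x y). Proof. by case: hVL => _ _ _ _ [_ h]; case: (h x y). Qed.
Lemma jub2 x y : le y (join x y). Proof. by case: hVL => _ _ _ _ [_ h]; case: (h x y) => _ []. Qed.
Lemma jlub x y z : le x z -> le y z -> le (join x y) z.
Proof. by case: hVL => _ _ _ _ [_ h]; case: (h x y) => _ [_]; apply. Qed.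

Lemma leDl x y z : le x y -> le (z + x) (z + y).
Proof. by move=> h; rewrite ![z + _]addrC; apply: leDr. Qed.
Lemma leD2 a b c d : le a b -> le c d -> le (a + c) (b + d).
Proof. move=> h1 h2; apply: (letr (leDr c h1)); exact: leDl. Qed.
Lemma leN x y : le x y -> le (- y) (- x).
Proof.
move=> h; have := leDr (- x - y) h.
by rewrite addrA subrr add0r [y + _]addrC subrK.
Qed.
Lemma le_subP x y : le x y <-> le 0 (y - x).
Proof.
split=> h; first by have := leDr (- x) h; rewrite subrr.
by have := leDr x h; rewrite add0r subrK.
Qed.
Lemma joinC x y : join x y = join y x.
Proof. by apply: leanti; apply: jlub; [apply: jub2|apply: jub1|apply: jub2|apply: jub1]. Qed.
Lemma join_mono a b c d : le a c -> le b d -> le (join a b) (join c d).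
Proof. by move=> h1 h2; apply: jlub; [apply: letr h1 (jub1 _ _)|apply: letr h2 (jub2 _ _)]. Qed.
Lemma joinD a b c : join (a + c) (b + c) = join a b + c.
Proof.
apply: leanti; first by apply: jlub; apply: leDr; [apply: jub1|apply: jub2].
have h : le (join a b) (join (a + c) (b + c) - c).
  by apply: jlub; [rewrite -{1}(addrK c a)|rewrite -{1}(addrK c b)]; apply: leDr;
     [apply: jub1|apply: jub2].
by have := leDr c h; rewrite subrK.
Qed.
Lemma join00 : join 0 0 = 0.
Proof. by apply: leanti; [apply: jlub; apply: lerf|apply: jub1]. Qed.
Lemma joinZ t a b : 0 <= t -> join (t *: a) (t *: b) = t *: join a b.
Proof.
rewrite le_eqVlt => /orP [/eqP <-|t0]; first by rewrite !scale0r join00.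
apply: leanti; first by apply: jlub; apply: leZ (ltW t0) _; [apply: jub1|apply: jub2].
have tn0 : t != 0 by rewrite gt_eqF.
have h : le (join a b) (t^-1 *: join (t *: a) (t *: b)).
  by apply: jlub; [rewrite -{1}(scalerK tn0 a)|rewrite -{1}(scalerK tn0 b)];
    apply: leZ; rewrite ?invr_ge0 ?(ltW t0) //; [apply: jub1|apply: jub2].
by have := leZ (ltW t0) h; rewrite scalerA divff // scale1r.
Qed.

Definition meet a b := - join (- a) (- b).
Lemma meet_lb1 a b : le (meet a b) a.
Proof. by have := leN (jub1 (- a) (- b)); rewrite opprK. Qed.
Lemma meet_lb2 a b : le (meet a b) b.
Proof. by have := leN (jub2 (- a) (- b)); rewrite opprK. Qed.
Lemma meet_glb c a b : le c a -> le c b -> le c (meet a b).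
Proof. by move=> h1 h2; have := leN (jlub (leN h1) (leN h2)); rewrite opprK. Qed.
Lemma meetC a b : meet a b = meet b a.
Proof. by rewrite /meet joinC. Qed.
Lemma meet_mono a b c d : le a c -> le b d -> le (meet a b) (meet c d).
Proof.
by move=> h1 h2; apply: meet_glb; [apply: letr (meet_lb1 _ _) h1|apply: letr (meet_lb2 _ _) h2].
Qed.
Lemma meetZ t a b : 0 <= t -> meet (t *: a) (t *: b) = t *: meet a b.
Proof. by move=> t0; rewrite /meet -!scalerN joinZ // scalerN. Qed.
Lemma meetD a b c : meet (a + c) (b + c) = meet a b + c.
Proof. by rewrite /meet !opprD joinD opprD opprK. Qed.
Lemma sub_meet a b : a - meet a b = join 0 (a - b).
Proof. by rewrite /meet opprK addrC -joinD addNr [- b + a]addrC. Qed.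

Definition pos z := join z 0.
Definition neg z := join (- z) 0.
Lemma pos_ge0 z : le 0 (pos z). Proof. exact: jub2. Qed.
Lemma neg_ge0 z : le 0 (neg z). Proof. exact: jub2. Qed.
Lemma pos_neg z : pos z - neg z = z.
Proof.
have -> : pos z = neg z + z by rewrite /pos /neg -joinD addNr add0r joinC.
by rewrite addrAC subrr add0r.
Qed.
Lemma meet_pos_neg z : meet (pos z) (neg z) = 0.
Proof.
have h := sub_meet (pos z) (neg z).
rewrite pos_neg joinC -/(pos z) in h.
have : pos z - (pos z - meet (pos z) (neg z)) = meet (pos z) (neg z).
  by rewrite opprB addrC subrK.
by rewrite h subrr => <-.
Qed.
Lemma vabs_ge0 z : le 0 (vabs join z).
Proof.
have := leD2 (jub1 z (- z)) (jub2 z (- z)); rewrite subrr => h.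
have h2 : 0 <= (2:R)^-1 by rewrite invr_ge0.
have e2 : (2:R)^-1 + 2^-1 = 1 by field.
have := leZ h2 h; rewrite scaler0 scalerDr -scalerDl e2 scale1r; exact.
Qed.
Lemma vabs_pos w : le 0 w -> vabs join w = w.
Proof.
move=> h; apply: leanti; last exact: jub1.
apply: jlub; first exact: lerf.
by have := leN h; rewrite oppr0 => h1; apply: letr h1 h.
Qed.
Lemma vabsZ t z : 0 <= t -> vabs join (t *: z) = t *: vabs join z.
Proof. by move=> t0; rewrite /vabs -scalerN joinZ. Qed.
Lemma pos_neg_vabs z : le (pos z + neg z) (vabs join z).
Proof.
rewrite {1}/pos -joinD add0r [z + _]addrC /neg -joinD addNr add0r.
apply: jlub; apply: jlub; rewrite ?vabs_ge0 //; try exact: vabs_ge0.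
- exact: jub1.
- exact: jub2.
Qed.
Lemma norm_mono u w : le 0 u -> le u w -> `|u| <= `|w|.
Proof. by move=> h0 h; apply: hLN; rewrite !vabs_pos //; apply: letr h. Qed.
Lemma le_scale_mono a b x : a <= b -> le 0 x -> le (a *: x) (b *: x).
Proof.
move=> ab x0; apply/le_subP; rewrite -scalerBl.
have h2 : 0 <= b - a by rewrite subr_ge0.
by have := leZ h2 x0; rewrite scaler0.
Qed.

Lemma arch v x : le 0 v -> le 0 x -> (forall e, 0 < e -> le v (e *: x)) -> v = 0.
Proof.
move=> v0 x0 hv.
have H : forall e, 0 < e -> `|v| <= e * `|x|.
  by move=> e e0; have := norm_mono v0 (hv e e0); rewrite normrZ ger0_norm // ltW.
apply/normr0_eq0/eqP; rewrite eq_le normr_ge0 andbT; apply/ler_addgt0Pr => e e0.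
rewrite add0r.
have x1 : 0 < `|x| + 1 by have := normr_ge0 x; lra.
apply: le_trans (H (e / (`|x| + 1)) _) _; first by rewrite divr_gt0.
rewrite mulrAC ler_pdivrMr //; rewrite mulrDr mulr1 lerDl ltW //.
Qed.

Lemma arch_nat v x : le 0 v -> (forall n : nat, le (n.+1%:R *: v) x) -> v = 0.
Proof.
move=> v0 hv.
have H : forall n : nat, n.+1%:R * `|v| <= `|x|.
  move=> n; have h2 : 0 <= n.+1%:R :> R by [].
  have := leZ h2 v0; rewrite scaler0 => h3.
  by have := norm_mono h3 (hv n); rewrite normrZ ger0_norm.
apply/normr0_eq0/eqP; rewrite eq_le normr_ge0 andbT; rewrite leNgt; apply/negP => vp.
have := H (truncn (`|x| / `|v|)); have := truncnS_gt (`|x| / `|v|).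
rewrite ltr_pdivrMr // => h1 h2.
by have := lt_le_trans h1 h2; rewrite ltxx.
Qed.


Lemma pos_hom (pi : E -> E) M :
  (forall x y, pi (x + y) = pi x + pi y) -> (forall x, pi (- x) = - pi x) -> 0 <= M ->
  (forall u, le 0 u -> le 0 (pi u) /\ le (pi u) (M *: u)) ->
  forall z, pi (pos z) = pos (pi z).
Proof.
move=> piD piN M0 hpi z.
set u := pi (pos z); set w := pi (neg z).
have ez : pi z = u - w by rewrite -{1}(pos_neg z) piD piN.
have [u0 uM] := hpi _ (pos_ge0 z); have [w0 wM] := hpi _ (neg_ge0 z).
have m0 : meet u w = 0.
  apply: leanti; last exact: meet_glb.
  by have := meet_mono uM wM; rewrite meetZ // meet_pos_neg scaler0.
by rewrite ez /pos joinC -sub_meet m0 subr0.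
Qed.

Lemma join_hom (pi : E -> E) M :
  (forall x y, pi (x + y) = pi x + pi y) -> (forall x, pi (- x) = - pi x) -> 0 <= M ->
  (forall u, le 0 u -> le 0 (pi u) /\ le (pi u) (M *: u)) ->
  forall a b, pi (join a b) = join (pi a) (pi b).
Proof.
move=> piD piN M0 hpi a b.
have e : forall x y, join x y = pos (x - y) + y by move=> x y; rewrite /pos -joinD subrK add0r.
by rewrite !e piD (pos_hom piD piN M0 hpi) piD piN.
Qed.

Lemma meet_hom (pi : E -> E) M :
  (forall x y, pi (x + y) = pi x + pi y) -> (forall x, pi (- x) = - pi x) -> 0 <= M ->
  (forall u, le 0 u -> le 0 (pi u) /\ le (pi u) (M *: u)) ->
  forall a b, pi (meet a b) = meet (pi a) (pi b).
Proof.
move=> piD piN M0 hpi a b.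
by rewrite /meet piN (join_hom piD piN M0 hpi) !piN.
Qed.

Fixpoint Gf (f : E -> E) (m : R) (N : nat) (v : E) : E :=
  match N with
  | O => m^-1 *: v
  | N'.+1 => m^-1 *: (v + f (Gf f m N' v))
  end.

Fixpoint Cf (m M : R) (N : nat) : R :=
  match N with
  | O => m^-1
  | N'.+1 => m^-1 * (1 + M * Cf m M N')
  end.

Lemma geo0 (a B r : R) : 0 <= r < 1 -> (forall N, a <= B * r ^+ N) -> a <= 0.
Proof.
move=> /andP [r0 r1] h.
have hr : `|r| < 1 by rewrite ger0_norm.
apply: (cvgr_to_ge (cvg_geometric B hr)); apply: nearW => n; exact: h n.
Qed.



Lemma g1 (A B C D : E) : (A + B + C) - (D + B) = C - (D - A).
Proof. by rewrite addrAC [D + B]addrC opprD addrA addrK opprB addrA addrAC [A + C]addrC. Qed.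
Lemma g2 (a b x y: E) : a - b + (x - y) = (a + x) - (b + y).
Proof. by rewrite opprD addrACA. Qed.

Lemma UB (S : E -> E) (F : set E) (L c : R) :
  (forall x y, S (x + y) = S x + S y) -> (forall (a : R) x, S (a *: x) = a *: S x) ->
  is_ideal le join F -> order_dense le F ->
  0 <= L -> (forall x, le 0 x -> le (- (L *: x)) (S x) /\ le (S x) (L *: x)) ->
  0 <= c -> (forall z, F z -> `|S z| <= c * `|z|) ->
  forall x, le 0 x -> le (S x) (c *: x).
Proof.
move=> SD SZ [F0 FD FZ Fsol] Fd L0 hS c0 hc.
have SN : forall x, S (- x) = - S x by move=> x; rewrite -scaleN1r SZ scaleN1r.
have Fpos : forall x y, F y -> le 0 x -> le x y -> F x.
  by move=> x y Fy x0 xy; apply: (Fsol x y Fy); rewrite !vabs_pos //; apply: letr xy.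
pose K := L + 1.
pose pi := fun x => S x + K *: x.
have piD : forall x y, pi (x + y) = pi x + pi y.
  by move=> x y; rewrite /pi SD scalerDr addrACA.
have piZ : forall (a : R) x, pi (a *: x) = a *: pi x.
  by move=> a x; rewrite /pi SZ scalerDr !scalerA mulrC.
have piN : forall x, pi (- x) = - pi x by move=> x; rewrite -scaleN1r piZ scaleN1r.
have piB : forall x y, pi (x - y) = pi x - pi y by move=> x y; rewrite piD piN.
pose M := K + L.
have M0 : 0 <= M by rewrite /M /K; lra.
have K1 : 1 <= K by rewrite /K; lra.
have hpi : forall u, le 0 u -> le u (pi u) /\ le (pi u) (M *: u).
  move=> u u0; have [h1 h2] := hS u u0; split.
  - have e : - (L *: u) + K *: u = u by rewrite /K scalerDl scale1r addKr.
    by have := leDr (K *: u) h1; rewrite e; exact.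
  - have e : L *: u + K *: u = M *: u by rewrite /M [in RHS]scalerDl addrC.
    by have := leDr (K *: u) h2; rewrite e; exact.
have hpi0 : forall u, le 0 u -> le 0 (pi u) /\ le (pi u) (M *: u).
  by move=> u u0; have [h1 h2] := hpi u u0; split => //; apply: letr h1.
have Fpi : forall u, F u -> le 0 u -> F (pi u).
  move=> u Fu u0; have [h1 h2] := hpi0 u u0.
  by apply: (Fpos _ (M *: u)) => //; apply: FZ.
pose kap := c + K.
have hpin : forall z, F z -> `|pi z| <= kap * `|z|.
  move=> z Fz; rewrite /pi /kap mulrDl; apply: le_trans (ler_normD _ _) _.
  apply: lerD; first exact: hc.
  by rewrite normrZ ger0_norm // /K; lra.
have stepN : forall mu, kap < mu -> forall x, F x -> le 0 x -> le (pi x) (mu *: x).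
  move=> mu kmu x Fx x0.
  have kap0 : 0 < kap by rewrite /kap /K; lra.
  have mu0 : 0 < mu by lra.
  have mun0 : mu != 0 by rewrite gt_eqF.
  have mui : 0 <= mu^-1 by rewrite invr_ge0 ltW.
  pose f := fun v => mu^-1 *: pi v.
  pose P := fun n => iter n f x.
  have GB : forall N a b, Gf pi mu N (a - b) = Gf pi mu N a - Gf pi mu N b.
    elim=> [|N IH] a b /=; first by rewrite scalerBr.
    by rewrite IH piB -scalerBr g2.
  have GP : forall N, Gf pi mu N (mu *: x - pi x) = x - P N.+1.
    elim=> [|N IH] /=.
      by rewrite scalerBr scalerA mulVf // scale1r.
    rewrite IH piB addrA subrK scalerBr scalerA mulVf // scale1r.
    by [].
  have Cpos : forall N, 0 < Cf mu M N.
    elim=> [|N IH] /=; first by rewrite invr_gt0.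
    apply: mulr_gt0; first by rewrite invr_gt0.
    by have := mulr_ge0 M0 (ltW IH); lra.
  have Gpos : forall N u, le 0 u ->
      le (mu^-1 *: u) (Gf pi mu N u) /\ le (Gf pi mu N u) (Cf mu M N *: u).
    elim=> [|N IH] u u0 /=; first by split; exact: lerf.
    have [g1' g2'] := IH u u0.
    have g0 : le 0 (Gf pi mu N u).
      by apply: letr g1'; have := leZ mui u0; rewrite scaler0.
    have [p1 p2] := hpi0 _ g0.
    split.
      by apply: leZ mui _; have := leDl u p1; rewrite addr0.
    rewrite -scalerA; apply: leZ mui _.
    have h3 : le (pi (Gf pi mu N u)) ((M * Cf mu M N) *: u).
      by apply: letr p2 _; rewrite -scalerA; apply: leZ M0 g2'.
    by have := leDl u h3; rewrite scalerDl scale1r.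
  have Ppos : forall n, le 0 (P n) /\ F (P n) /\ `|P n| <= (kap / mu) ^+ n * `|x|.
    elim=> [|n [IH1 [IH2 IH3]]].
      by split; [|split]; rewrite //= expr0 mul1r.
    have [q1 q2] := hpi0 _ IH1.
    have eP : P n.+1 = mu^-1 *: pi (P n) by [].
    rewrite eP; split; [|split].
    - by have := leZ mui q1; rewrite scaler0.
    - by apply: FZ; apply: Fpi.
    - rewrite normrZ ger0_norm //.
      apply: le_trans (ler_wpM2l mui (hpin _ IH2)) _.
      rewrite mulrA; apply: le_trans (ler_wpM2l _ IH3) _.
        by rewrite mulr_ge0 // ltW.
      suff -> : (kap / mu) ^+ n.+1 * `|x| = mu^-1 * kap * ((kap / mu) ^+ n * `|x|) by [].
      by rewrite exprSr; field.
  pose w := mu *: x - pi x.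
  have Hq : forall N, `|neg w| <= mu * ((kap / mu) ^+ N.+1 * `|x|).
    move=> N.
    have [e0 [_ en]] := Ppos N.+1.
    have [gp1 gp2] := Gpos N (pos w) (pos_ge0 w).
    have [gq1 gq2] := Gpos N (neg w) (neg_ge0 w).
    have eqG : Gf pi mu N (pos w) - Gf pi mu N (neg w) = x - P N.+1.
      by rewrite -GB pos_neg GP.
    have h1 : le (Gf pi mu N (neg w)) (Gf pi mu N (pos w) + P N.+1).
      rewrite -[Gf pi mu N (pos w)](subrK (Gf pi mu N (neg w))) eqG addrAC subrK.
      by have := leDr (Gf pi mu N (neg w)) x0; rewrite add0r.
    have hC := Cpos N.
    have h2 : le (Gf pi mu N (neg w)) (P N.+1).
      apply: letr (meet_glb (lerf _) h1) _.
      rewrite -{1}[Gf pi mu N (neg w)](subrK (P N.+1)) meetD.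
      have X : le (meet (Gf pi mu N (neg w) - P N.+1) (Gf pi mu N (pos w))) 0.
        have X1 : le (Gf pi mu N (neg w) - P N.+1) (Cf mu M N *: neg w).
          apply: letr gq2.
          by have := leDl (Gf pi mu N (neg w)) (leN e0); rewrite oppr0 addr0.
        apply: letr (meet_mono X1 gp2) _.
        by rewrite meetZ ?(ltW hC) // meetC meet_pos_neg scaler0; apply: lerf.
      by have := leDr (P N.+1) X; rewrite add0r.
    have h3 : le (neg w) (mu *: P N.+1).
      by have := leZ (ltW mu0) (letr gq1 h2); rewrite scalerA mulfV // scale1r.
    have := norm_mono (neg_ge0 w) h3; rewrite normrZ ger0_norm ?(ltW mu0) // => h.
    by apply: le_trans h (ler_wpM2l (ltW mu0) en).
  have q0 : neg w = 0.
    apply/normr0_eq0/eqP; rewrite eq_le normr_ge0 andbT.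
    apply: (@geo0 _ (mu * (kap / mu * `|x|)) (kap / mu)).
      apply/andP; split; first by rewrite divr_ge0 // ltW.
      by rewrite ltr_pdivrMr // mul1r.
    move=> N; have := Hq N.
    suff -> : mu * ((kap / mu) ^+ N.+1 * `|x|) = mu * (kap / mu * `|x|) * (kap / mu) ^+ N by [].
    by rewrite exprSr; ring.
  have ew : w = pos w by rewrite -{1}(pos_neg w) q0 subr0.
  have : le 0 w by rewrite ew; exact: pos_ge0.
  by move=> H; apply/le_subP; exact: H.
have stepE : forall mu, kap < mu -> forall x, le 0 x -> le (pi x) (mu *: x).
  move=> mu kmu x x0.
  have mu0 : 0 <= mu by move: kmu; rewrite /kap /K; lra.
  pose p := pos (pi x - mu *: x).
  case: (pselect (p = 0)) => [p0|pn0].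
    have := jub1 (pi x - mu *: x) 0; rewrite -/(pos _) -/p p0 => h.
    by apply/le_subP; have := leN h; rewrite oppr0 opprB.
  have [y [Fy y0 yn0 yp]] := Fd p (pos_ge0 _) pn0.
  exfalso; apply: yn0.
  have [pix0 _] := hpi0 x x0.
  apply: (arch_nat (x := pi x) y0) => n.
  pose m : R := n.+1%:R.
  have m1 : 1 <= m by rewrite /m ler1n.
  have m0 : 0 <= m by lra.
  have my0 : le 0 (m *: y) by have := leZ m0 y0; rewrite scaler0.
  pose w := meet x (m *: y).
  have w0 : le 0 w := meet_glb x0 my0.
  have Fw : F w := Fpos _ _ (FZ m _ Fy) w0 (meet_lb2 _ _).
  have h1 : le (pi w) (mu *: x) := letr (stepN mu kmu w Fw w0) (leZ mu0 (meet_lb1 _ _)).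
  rewrite /w (meet_hom piD piN M0 hpi0) piZ in h1.
  have [y1 _] := hpi y y0.
  have h2 : le p (pos (pi x - m *: y)).
    apply: jlub; last exact: pos_ge0.
    apply: (@letr _ (pi x - meet (pi x) (m *: pi y))).
      exact: leDl (leN h1).
    rewrite sub_meet /pos joinC; apply: join_mono (lerf _); apply: leDl; apply: leN.
    exact: leZ m0 y1.
  have yr : le y (pos (pi x - m *: y)) := letr yp h2.
  pose s := neg (pi x - m *: y).
  have s0 : le 0 s := neg_ge0 _.
  have hsy : le (meet s y) 0.
    by have := meet_mono (lerf s) yr; rewrite [meet s (pos _)]meetC meet_pos_neg.
  have hs1 : le s (m *: y).
    apply: jlub => //; rewrite opprB.
    by have := leDl (m *: y) (leN pix0); rewrite oppr0 addr0.
  have hs2 : le s (m *: s) by have := le_scale_mono m1 s0; rewrite scale1r.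
  have hs3 : le s 0.
    apply: letr (meet_glb hs2 hs1) _.
    by rewrite meetZ //; have := leZ m0 hsy; rewrite scaler0.
  have : le (- (pi x - m *: y)) 0 := letr (jub1 _ _) hs3.
  move/leN; rewrite oppr0 opprK => h3.
  by apply/le_subP.
move=> x x0.
pose v := pos (S x - c *: x).
have v0 : v = 0.
  apply: (arch (pos_ge0 _) x0) => e e0.
  apply: jlub; last by have := leZ (ltW e0) x0; rewrite scaler0.
  have ke : kap < kap + e by lra.
  have h := iffLR (le_subP _ _) (stepE _ ke x x0).
  apply/le_subP.
  have <- : (kap + e) *: x - pi x = e *: x - (S x - c *: x).
    by rewrite /pi /kap !scalerDl g1.
  exact: h.
have := jub1 (S x - c *: x) 0; rewrite -/(pos _) -/v v0 => h.
by apply/le_subP; have := leN h; rewrite oppr0 opprB.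
Qed.



Lemma NB (S : E -> E) (c : R) :
  (forall x y, S (x + y) = S x + S y) -> (forall x, S (- x) = - S x) -> 0 <= c ->
  (forall x, le 0 x -> le (- (c *: x)) (S x) /\ le (S x) (c *: x)) ->
  forall x, `|S x| <= c * `|x|.
Proof.
move=> SD SN c0 hS x.
have ex : S x = S (pos x) - S (neg x) by rewrite -SN -SD pos_neg.
have [a1 a2] := hS _ (pos_ge0 x); have [b1 b2] := hS _ (neg_ge0 x).
have hv := leZ c0 (pos_neg_vabs x); rewrite scalerDr in hv.
have H : le (vabs join (S x)) (c *: vabs join x).
  apply: jlub.
  - rewrite ex; apply: letr _ hv.
    by have := leN b1; rewrite opprK => b3; exact: leD2 a2 b3.
  - rewrite ex opprB; apply: letr _ hv; rewrite [c *: pos x + _]addrC.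
    by have := leN a1; rewrite opprK => a3; exact: leD2 b2 a3.
rewrite -vabsZ // in H.
by have := hLN H; rewrite normrZ ger0_norm.
Qed.

End Riesz.

Theorem mainTheorem7 (R : realType) (E : completeNormedModType R)
  (le : E -> E -> Prop) (join : E -> E -> E)
  (hE : banach_lattice le join)
  (F : set E) (hFid : is_ideal le join F) (hFcl : closed F)
  (hFdense : order_dense le F)
  (T : {linear E -> E}) (hT : in_center le T) :
  opnorm_on F T = opnorm_on setT T.
Proof.
case: hE => hVL hLN.
case: hT => _ [lam hlam].
pose L := `|lam|.
have L0 : 0 <= L := normr_ge0 _.
have hS : forall x, le 0 x -> le (- (L *: x)) (T x) /\ le (T x) (L *: x).
  move=> x x0; have [h1 h2] := hlam x x0.
  have e : le (lam *: x) (L *: x) := le_scale_mono hVL (ler_norm lam) x0.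
  split; [exact: (letr hVL (leN hVL e) h1) | exact: (letr hVL h2 e)].
have TD : forall x y, T (x + y) = T x + T y by move=> x y; rewrite linearD.
have TZ : forall (a : R) x, T (a *: x) = a *: T x by move=> a x; rewrite linearZ.
have TN : forall x, T (- x) = - T x by move=> x; rewrite linearN.
have bnd : forall x, `|T x| <= L * `|x| := NB hVL hLN TD TN L0 hS.
pose A (s : set E) := [set `|T x| | x in [set x | s x /\ `|x| <= 1]].
have ubA : forall s, ubound (A s) L.
  move=> s _ [x [_ x1] <-]; apply: le_trans (bnd x) _.
  by rewrite -{2}(mulr1 L) ler_wpM2l.
have hub : forall s, has_ubound (A s) by move=> s; exists L; apply: ubA.
have A0 : forall s, s 0 -> A s 0.
  by move=> s s0; exists 0; [split; rewrite ?normr0 | rewrite linear0 normr0].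
have ne : forall s, s 0 -> A s !=set0 by move=> s s0; exists 0; apply: A0.
case: hFid => F0 FD FZ Fsol.
have -> : opnorm_on F T = sup (A F) by [].
have -> : opnorm_on setT T = sup (A setT) by [].
set c := sup (A F).
have c0 : 0 <= c := ub_le_sup (hub F) (A0 F F0).
have hc : forall z, F z -> `|T z| <= c * `|z|.
  move=> z Fz; case: (eqVneq z 0) => [->|zn0]; first by rewrite linear0 !normr0 mulr0.
  have nz : 0 < `|z| by rewrite normr_gt0.
  have : A F `|T (`|z|^-1 *: z)|.
    exists (`|z|^-1 *: z) => //; split; first by apply: FZ.
    rewrite normrZ ger0_norm; last by rewrite invr_ge0.
    by rewrite mulVf ?normr_eq0.
  move/(ub_le_sup (hub F)); rewrite TZ normrZ ger0_norm; last by rewrite invr_ge0.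
  by rewrite mulrC ler_pdivrMr.
have up := UB hVL hLN TD TZ (And4 F0 FD FZ Fsol) hFdense L0 hS c0 hc.
have up' : forall x, le 0 x -> le (- T x) (c *: x).
  apply: (UB hVL hLN (S := fun x => - T x)) (And4 F0 FD FZ Fsol) hFdense L0 _ c0 _.
  - by move=> x y /=; rewrite TD opprD.
  - by move=> a x /=; rewrite TZ scalerN.
  - move=> x x0; have [h1 h2] := hS x x0; split.
      by have := leN hVL h2.
    by have := leN hVL h1; rewrite opprK.
  - by move=> z Fz /=; rewrite normrN; apply: hc.
have bnd' : forall x, `|T x| <= c * `|x|.
  apply: (NB hVL hLN TD TN c0) => x x0; split; last exact: up.
  by have := leN hVL (up' x x0); rewrite opprK.
apply: le_anti; apply/andP; split.
- apply: ge_sup; first exact: ne.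
  move=> _ [x [Fx x1] <-]; apply: (ub_le_sup (hub setT)).
  by exists x.
- apply: ge_sup; first exact: ne.
  move=> _ [x [_ x1] <-]; apply: le_trans (bnd' x) _.
  by rewrite -{2}(mulr1 c) ler_wpM2l.
Qed.
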